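(* Let $(X,\alpha)$ be a Cantor minimal system, $m\ge1$, and let $c:X\to\mathbb{Z}_m$ be a continuous function. Suppose that $\alpha\times c$, $(x,k)\mapsto(\alpha(x),k+c(x))$, is a minimal homeomorphism of $X\times\mathbb{Z}_m$. Then \[ T\big(K^0(X\times\mathbb{Z}_m,\alpha\times c)/\pi^*(K^0(X,\alpha))\big)\cong\mathbb{Z}_m, \] and a generator of this group is the image of the class of the $\mathbb{Z}$-valued continuous function \[ f_0(x,k)=\begin{cases}1 & c(\alpha^{-1}(x))\neq0\text{ and }k\in\{0,1,\dots,c(\alpha^{-1}(x))-1\},\\ 0&\text{otherwise}.\end{cases} \]
   Context: A Cantor minimal system $(X,\alpha)$ is a Cantor set $X$ with a homeomorphism $\alpha$ having no nontrivial closed invariant subsets. $\mathbb{Z}_m=\mathbb{Z}/m\mathbb{Z}$, identified with $\{0,1,\dots,m-1\}$. For a minimal homeomorphism $\gamma$ of a Cantor set $Z$, $K^0(Z,\gamma)=C(Z,\mathbb{Z})/\{f-f\circ\gamma^{-1}:f\in C(Z,\mathbb{Z})\}$. $\pi:X\times\mathbb{Z}_m\to X$ is the first-coordinate projection and $\pi^*:K^0(X,\alpha)\to K^0(X\times\mathbb{Z}_m,\alpha\times c)$ is $[g]\mapsto[g\circ\pi]$. $T(G)$ denotes the torsion subgroup of an abelian group $G$. *)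

(* Defs.v *)
From HB Require Import structures.
From mathcomp Require Import all_boot all_order all_algebra.
From mathcomp Require Import all_classical all_reals all_analysis.
Set Implicit Arguments. Unset Strict Implicit. Unset Printing Implicit Defensive.
Import Order.TTheory GRing.Theory Num.Theory.
Local Open Scope classical_set_scope.
Local Open Scope ring_scope.

Definition cantor_set (X : topologicalType) : Prop :=
  exists (f : X -> cantor_space) (g : cantor_space -> X),
    [/\ cancel f g, cancel g f, continuous f & continuous g].

Definition minimal_homeo (Z : topologicalType) (g ginv : Z -> Z) : Prop :=
  [/\ cancel g ginv, cancel ginv g, continuous g, continuous ginv &
      forall A : set Z, closed A -> g @` A = A -> A = set0 \/ A = setT].

Definition cantor_minimal_system (X : topologicalType) (alpha alphainv : X -> X) :=
  cantor_set X /\ minimal_homeo alpha alphainv.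

Definition CZ (Z : topologicalType) (f : Z -> int) : Prop :=
  continuous (f : Z -> discrete_topology int).

Definition zm_add (m : nat) : 'I_m -> 'I_m -> 'I_m :=
  match m as m0 return 'I_m0 -> 'I_m0 -> 'I_m0 with
  | 0 => fun k _ => k
  | n.+1 => fun k j => (k + j)%R
  end.
Definition zm_sub (m : nat) : 'I_m -> 'I_m -> 'I_m :=
  match m as m0 return 'I_m0 -> 'I_m0 -> 'I_m0 with
  | 0 => fun k _ => k
  | n.+1 => fun k j => (k - j)%R
  end.

Definition XZm (X : topologicalType) (m : nat) : topologicalType :=
  (X * discrete_topology 'I_m)%type.

Definition skewp (X : topologicalType) (m : nat) (alpha : X -> X) (c : X -> 'I_m)
  (p : XZm X m) : XZm X m := (alpha p.1, zm_add p.2 (c p.1)).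
Definition skewp_inv (X : topologicalType) (m : nat) (alphainv : X -> X)
  (c : X -> 'I_m) (p : XZm X m) : XZm X m :=
  (alphainv p.1, zm_sub p.2 (c (alphainv p.1))).

(* Coboundaries {f - f o gamma^{-1} : f in C(Z,Z)}: K^0(Z,gamma) = C(Z,Z)/coboundaries. *)
Definition coboundary (Z : topologicalType) (ginv : Z -> Z) (h : Z -> int) : Prop :=
  exists f : Z -> int, CZ f /\ h = (fun z => f z - f (ginv z)).

(* The subgroup of C(X x Z_m, Z) whose image in K^0(X x Z_m, alpha x c) is
   pi^*(K^0(X,alpha)), i.e. the kernel of
   C(X x Z_m, Z) -> K^0(X x Z_m, alpha x c) / pi^*(K^0(X, alpha)). *)
Definition pistar_subgroup (X : topologicalType) (m : nat) (alphainv : X -> X)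
  (c : X -> 'I_m) (h : XZm X m -> int) : Prop :=
  exists (b : XZm X m -> int) (g : X -> int),
    [/\ coboundary (skewp_inv alphainv c) b, CZ g &
        h = (fun p => b p + g p.1)].

Definition f0 (X : topologicalType) (m : nat) (alphainv : X -> X) (c : X -> 'I_m)
  (p : XZm X m) : int :=
  if ((c (alphainv p.1) : nat) != 0%N) && ((p.2 : nat) < c (alphainv p.1))%N
  then 1 else 0.

(* Main.v *)
Require Import Defs.
From HB Require Import structures.
From mathcomp Require Import all_boot all_order all_algebra.
From mathcomp Require Import all_classical all_reals all_analysis.
From mathcomp Require Import zify ring.
Import Order.TTheory GRing.Theory Num.Theory.
Local Open Scope classical_set_scope.
Local Open Scope ring_scope.
Set Implicit Arguments. Unset Strict Implicit. Unset Printing Implicit Defensive.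
Definition lc {Z : topologicalType} {T : Type} (f : Z -> T) :=
  forall z, nbhs z [set w | f w = f z].

Lemma cont_lc (Z : topologicalType) (T : choiceType) (f : Z -> discrete_topology T) :
  continuous f <-> lc f.
Proof.
split.
  move=> cf z; have := cf z [set f z] (discrete_set1 _); by [].
move=> h z B /=; rewrite nbhs_principalE => Bfz.
by apply: filterS (h z) => w /= ->; exact: Bfz.
Qed.

Lemma lc_comp (Z W : topologicalType) (T : Type) (h : Z -> W) (f : W -> T) :
  continuous h -> lc f -> lc (fun z => f (h z)).
Proof. by move=> ch hf z; exact: (ch z _ (hf (h z))). Qed.

Lemma lc_map2 (Z : topologicalType) (A B T : Type) (a : Z -> A) (b : Z -> B)
  (phi : A -> B -> T) : lc a -> lc b -> lc (fun z => phi (a z) (b z)).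
Proof.
move=> ha hb z; apply: filterS (filterI (ha z) (hb z)).
by move=> w [/= -> ->].
Qed.

Lemma lc_map (Z : topologicalType) (A T : Type) (a : Z -> A)
  (phi : A -> T) : lc a -> lc (fun z => phi (a z)).
Proof. by move=> ha z; apply: filterS (ha z) => w /= ->. Qed.

Lemma lc_cst (Z : topologicalType) (T : Type) (t : T) : lc (fun _ : Z => t).
Proof. by move=> z; apply: filterS filterT. Qed.

Lemma lc_sum (Z : topologicalType) (I : Type) (r : seq I) (P : pred I)
  (F : I -> Z -> int) : (forall i, lc (F i)) ->
  lc (fun z => \sum_(i <- r | P i) F i z).
Proof.
move=> hF; elim: r => [|i r IH].
  by under eq_fun do rewrite big_nil; exact: lc_cst.
under eq_fun do rewrite big_cons.
case: (P i).
  exact: (lc_map2 (fun a b => a + b) (hF i) IH).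
exact: IH.
Qed.

Section Prod.
Variables (X : topologicalType) (N : nat).

Lemma lcXZ (T : Type) (f : XZm X N -> T) :
  (forall j, lc (fun x => f (x, j))) -> lc f.
Proof.
move=> hf [x j]; exists ([set w | f (w, j) = f (x, j)], [set j]).
  split; first exact: hf.
  exact: (@discrete_set1 (discrete_topology 'I_N)).
by move=> [w k] [/= H1 ->].
Qed.

Lemma lc_slice (T : Type) (f : XZm X N -> T) j :
  lc f -> lc (fun x => f (x, j)).
Proof.
move=> hf x; have [[P Q] [/= HP HQ] HPQ] := hf (x, j).
apply: filterS HP => w Pw /=.
apply: (HPQ (w, j)); split => //=; exact: nbhs_singleton HQ.
Qed.
End Prod.
Lemma inv_const (Z : topologicalType) (g ginv : Z -> Z) (T : Type) (h : Z -> T) :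
  minimal_homeo g ginv -> lc h -> (forall p, h (ginv p) = h p) ->
  forall p q, h p = h q.
Proof.
case=> gK ginvK _ _ hmin hl hinv p q.
pose A := [set w | h w = h p].
have cA : closed A.
  move=> w /= cw; have [v [/= Av Bv]] := cw _ (hl w).
  by rewrite /A /= -Bv.
have gA : g @` A = A.
  apply/seteqP; split.
    move=> _ [w Aw <-]; rewrite /A /= -Aw -{2}(gK w); exact/esym/hinv.
  move=> w Aw; exists (ginv w); last exact: ginvK.
  by rewrite /A /= hinv.
case: (hmin A cA gA) => HA.
  have : A p by [].
  by rewrite HA.
have : A q by rewrite HA.
by rewrite /A /= => ->.
Qed.
Lemma modS2 n a : (a < n.+1 + n.+1)%N -> (a %% n.+1 = if a < n.+1 then a else a - n.+1)%N.
Proof.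
move=> h; case: ifP => h2; first exact: modn_small.
have -> : a = ((a - n.+1) + n.+1)%N by lia.
rewrite modnDr modn_small; lia.
Qed.

Section Ar.
Variable n : nat.
Implicit Types j c : 'I_n.+1.

Lemma vsub j c : nat_of_ord (j - c) = ((j + (n.+1 - c) %% n.+1) %% n.+1)%N.
Proof. by []. Qed.

Lemma vsub' j c : nat_of_ord (j - c) = (if c <= j then j - c else j + n.+1 - c)%N.
Proof.
rewrite vsub (@modS2 n (n.+1 - c)); last lia.
have hj := ltn_ord j; have hc := ltn_ord c.
case: ifP => h1; rewrite modS2; try lia; case: ifP => h2; case: ifP => h3; lia.
Qed.

Lemma vS' j : nat_of_ord (ordS j) = (if nat_of_ord j == n then 0 else j.+1)%N.
Proof.
rewrite /= modS2; have hj := ltn_ord j; last lia.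
case: ifP => h1; case: ifP => h2; lia.
Qed.

Lemma K1 j c :
  ((if (c != 0%N :> nat) && (j < c)%N then 1 else 0 : int) -
   (if (c != 0%N :> nat) && (ordS j < c)%N then 1 else 0)) =
  ((if nat_of_ord (j - c) == n then 1 else 0) - (if nat_of_ord j == n then 1 else 0)).
Proof.
rewrite vsub' vS'; have hj := ltn_ord j; have hc := ltn_ord c.
repeat case: ifP; lia.
Qed.

Lemma K2 j c :
  (if (c != 0%N :> nat) && (j < c)%N then 1 else 0 : int) *+ n.+1 =
  (nat_of_ord (j - c))%:Z - (nat_of_ord j)%:Z + (nat_of_ord c)%:Z.
Proof.
rewrite vsub'; have hj := ltn_ord j; have hc := ltn_ord c.
rewrite -mulr_natr.
repeat case: ifP; lia.
Qed.

Lemma K3 j c : ordS (j - c) = ordS j - c.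
Proof.
apply: ord_inj; rewrite vS' !vsub' vS'; have hj := ltn_ord j; have hc := ltn_ord c.
repeat case: ifP; lia.
Qed.

Lemma K4 (h : 'I_n.+1 -> int) j : \sum_i h i = 0 ->
  (- \sum_(i : 'I_n.+1 | (i < j)%N) h i) - (- \sum_(i : 'I_n.+1 | (i < ordS j)%N) h i) = h j.
Proof.
move=> h0; have hj := ltn_ord j.
case: (boolP (nat_of_ord j == n)) => hjn.
  have -> : \sum_(i : 'I_n.+1 | (i < ordS j)%N) h i = 0.
    by rewrite big_pred0 // => i; rewrite vS' hjn.
  move: h0; rewrite (bigD1 j) //= => h0.
  have -> : \sum_(i : 'I_n.+1 | (i < j)%N) h i = \sum_(i : 'I_n.+1 | i != j) h i.
    apply: eq_bigl => i; have hi := ltn_ord i.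
    apply/idP/idP; [move=> hij; apply/eqP => E; rewrite E in hij; lia|].
    move=> /eqP hne; have : nat_of_ord i <> nat_of_ord j by move=> E; apply: hne; exact: ord_inj.
    lia.
  move/eqP: h0; rewrite addr_eq0 => /eqP ->; by rewrite oppr0 subr0.
rewrite (@bigD1 _ _ _ _ j (fun i => (i < ordS j)%N)); last by rewrite vS' (negbTE hjn).
have -> : \sum_(i : 'I_n.+1 | (i < ordS j)%N && (i != j)) h i = \sum_(i : 'I_n.+1 | (i < j)%N) h i.
  apply: eq_bigl => i; rewrite vS' (negbTE hjn); have hi := ltn_ord i.
  apply/idP/idP.
    move=> /andP[h1 /eqP hne]; have : nat_of_ord i <> nat_of_ord j by move=> E; apply: hne; exact: ord_inj.
    lia.
  move=> hij; apply/andP; split; first lia.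
  apply/eqP => E; rewrite E in hij; lia.
by rewrite opprK addrCA addNr addr0.
Qed.

Lemma K5 (h : 'I_n.+1 -> int) : \sum_i h (ordS i) = \sum_i h i.
Proof. by rewrite [RHS](reindex_inj (@ordS_inj n.+1)). Qed.

Lemma ordS_ind (P : 'I_n.+1 -> Prop) : P ord0 -> (forall j, P j -> P (ordS j)) ->
  forall j, P j.
Proof.
move=> P0 PS j; have -> : j = inord (nat_of_ord j) by apply: ord_inj; rewrite inordK.
elim: (nat_of_ord j) (ltn_ord j) => [|k IH] hk.
  by have -> : inord 0 = ord0 :> 'I_n.+1 by apply: ord_inj; rewrite inordK.
have -> : inord k.+1 = ordS (inord k : 'I_n.+1).
  apply: ord_inj; rewrite vS' !inordK; try lia.
  case: ifP => //; lia.
apply: PS; apply: IH; lia.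
Qed.
End Ar.
Lemma sumE n : \sum_(j < n.+1) (if nat_of_ord j == n then 1 else 0 : int) = 1.
Proof.
rewrite (bigD1 ord_max) //= eqxx big1 ?addr0 // => i hi.
rewrite ifF //; apply/negbTE; apply: contra hi => /eqP h.
by apply/eqP/ord_inj.
Qed.

Lemma arith4 (gv W Wg F0v Fmv Fmg g0v q s t : int) (N jj : nat) :
  - s = t * N%:Z + jj%:Z -> F0v *+ N = Fmv - Fmg + g0v -> q = gv - (W - Wg) + F0v * s ->
  gv - F0v *+ jj = W + Fmv * t - (Wg + Fmg * t) + (q + g0v * t).
Proof. move=> *; nia. Qed.

Theorem lemma4p5 (X : topologicalType) (alpha alphainv : X -> X) (m : nat)
  (c : X -> 'I_m) :
  cantor_minimal_system alpha alphainv ->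
  (1 <= m)%N ->
  continuous (c : X -> discrete_topology 'I_m) ->
  minimal_homeo (skewp alpha c) (skewp_inv alphainv c) ->
  [/\ CZ (f0 alphainv c),
      pistar_subgroup alphainv c (fun p => f0 alphainv c p *+ m),
      (forall k : nat, (0 < k < m)%N ->
         not (pistar_subgroup alphainv c (fun p => f0 alphainv c p *+ k))) &
      (forall g : XZm X m -> int, CZ g ->
         (exists n : nat, (0 < n)%N /\ pistar_subgroup alphainv c (fun p => g p *+ n)) ->
         exists j : nat, pistar_subgroup alphainv c (fun p => g p - f0 alphainv c p *+ j))].
Proof.
move=> [[fc [gc _]] hmin] hm.
move: c; case: m hm => [//|n] _ c hc hskew.
have x0 : X := gc (fun _ => false).
have [aK aiK ca cai _] := hmin.
have [_ _ _ cgi _] := hskew.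
have lcc : lc c by apply/cont_lc.
have lcai : lc (fun x => c (alphainv x)) := lc_comp cai lcc.
set gi := skewp_inv alphainv c.
pose sg (p : XZm X n.+1) : XZm X n.+1 := (p.1, ordS p.2).
have giE : forall x j, gi (x, j) = (alphainv x, j - c (alphainv x)) by [].
have comm : forall p, gi (sg p) = sg (gi p).
  by move=> [x j]; rewrite /sg /= !giE /= K3.
pose E (p : XZm X n.+1) : int := if nat_of_ord p.2 == n then 1 else 0.
set F0 := f0 alphainv c.
have Hf0 : forall p, F0 p - F0 (sg p) = E (gi p) - E p.
  by move=> [x j]; rewrite /F0 /f0 /E giE /=; exact: K1.
have lcF0 : lc F0.
  apply: lcXZ => j.
  exact: (lc_map (fun a : 'I_n.+1 => if (a != 0%N :> nat) && (j < a)%N then 1 else 0 : int) lcai).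
have lcE : lc E by apply: lcXZ => j; exact: lc_cst.
have lcsg : forall (T : Type) (f : XZm X n.+1 -> T), lc f -> lc (fun p => f (sg p)).
  by move=> T f hf; apply: lcXZ => j; exact: (lc_slice (ordS j) hf).
have lcgi : forall (T : Type) (f : XZm X n.+1 -> T), lc f -> lc (fun p => f (gi p)).
  by move=> T f hf; exact: (lc_comp cgi hf).
have lcfst : forall (T : Type) (f : X -> T), lc f -> lc (fun p : XZm X n.+1 => f p.1).
  by move=> T f hf; apply: lcXZ => j.
have sumsg : forall (f : XZm X n.+1 -> int) x,
    \sum_(j < n.+1) (f (x, j) - f (sg (x, j))) = 0.
  move=> f x; rewrite sumrB /sg /=.
  by rewrite (@K5 n (fun j => f (x, j))) subrr.
pose Fm (p : XZm X n.+1) : int := - (nat_of_ord p.2)%:Z.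
pose g0 (x : X) : int := (nat_of_ord (c (alphainv x)))%:Z.
have K2e : forall p, F0 p *+ n.+1 = Fm p - Fm (gi p) + g0 p.1.
  move=> [x j]; rewrite /F0 /f0 /=; rewrite K2; set d := (j - c (alphainv x)); rewrite /Fm /g0 giE -/d /=; lia.
have lcFm : lc Fm by apply: lcXZ => j; exact: lc_cst.
have lcg0 : lc g0 := lc_map (fun a : 'I_n.+1 => (nat_of_ord a)%:Z) lcai.
have PS2 : pistar_subgroup alphainv c (fun p => F0 p *+ n.+1).
  exists (fun p => Fm p - Fm (gi p)), g0; split.
  - by exists Fm; split => //; apply/cont_lc.
  - by apply/cont_lc.
  - by apply: funext => p; rewrite K2e.
split.
- by apply/cont_lc.
- exact: PS2.
- move=> k /andP[hk0 hkN] [b [g [[f [cf ->]] cg heq]]].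
  have H : forall p, F0 p *+ k = f p - f (gi p) + g p.1.
    by move=> p; have := congr1 (fun phi => phi p) heq.
  pose u : XZm X n.+1 -> int := fun p => f p - f (sg p).
  pose h : XZm X n.+1 -> int := fun p => u p + E p *+ k.
  have lcf : lc f by apply/cont_lc.
  have lch : lc h.
    apply: (lc_map2 (fun a b => a + b)).
      exact: (lc_map2 (fun a b => a - b) lcf (lcsg _ _ lcf)).
    exact: (lc_map (fun a => a *+ k) lcE).
  have hinv : forall p, h (gi p) = h p.
    move=> p; have H1 := H p; have H2 := H (sg p).
    have H3 := congr1 (fun z => z *+ k) (Hf0 p); rewrite /= !mulrnBl in H3.
    rewrite /h /u -comm; move: H2; rewrite comm /= => H2.
    move: H1 H2 H3; move: (f p) (f (gi p)) (f (sg p)) (f (sg (gi p))) (E p *+ k) (E (gi p) *+ k) (F0 p *+ k) (F0 (sg p) *+ k) (g p.1) => a1 a2 a3 a4 a5 a6 a7 a8 a9 H1 H2 H3; lia.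
  have hcst := inv_const hskew lch hinv.
  have := sumsg f x0.
  have -> : \sum_(j < n.+1) (f (x0, j) - f (sg (x0, j))) =
            \sum_(j < n.+1) (h (x0, j) - E (x0, j) *+ k).
    by apply: eq_bigr => j _; rewrite /h /u addrK.
  rewrite sumrB (eq_bigr (fun _ => h (x0, ord0))); last by move=> j _; exact: hcst.
  rewrite sumr_const card_ord sumrMnl (_ : \sum_(j < n.+1) E (x0, j) = 1); last exact: sumE.
  move: (h (x0, ord0)) => C hh; rewrite -mulr_natr !natz in hh.
  have hh2 : (C * (n.+1)%:Z = k%:Z)%R by apply/eqP; rewrite -subr_eq0; apply/eqP.
  have [hC|hC] : (C <= 0 \/ 1 <= C)%R by lia.
    move: hh2 hC hk0 hkN; clear; move=> hh2 hC hk0 hkN; nia.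
  move: hh2 hC hk0 hkN; clear; move=> hh2 hC hk0 hkN; nia.
- move=> g cg [n' [hn' [b [h0 [[F [cF ->]] ch heq]]]]].
  have H : forall p, g p *+ n' = F p - F (gi p) + h0 p.1.
    by move=> p; have := congr1 (fun phi => phi p) heq.
  have lcF : lc F by apply/cont_lc.
  have lcg : lc g by apply/cont_lc.
  pose G : XZm X n.+1 -> int := fun p => F p - F (sg p).
  have lcG : lc G := lc_map2 (fun a b => a - b) lcF (lcsg _ _ lcF).
  have HG : forall p, (g p - g (sg p)) * n'%:Z = G p - G (gi p).
    move=> p; have H1 := H p; have H2 := H (sg p).
    move: H2; rewrite comm /= => H2.
    rewrite -mulr_natr natz in H1; rewrite -mulr_natr natz in H2; rewrite /G mulrBl.
    move: H1 H2; move: (g p * n'%:Z) (g (sg p) * n'%:Z) (F p) (F (gi p)) (F (sg p)) (F (sg (gi p))) (h0 p.1) => a1 a2 a3 a4 a5 a6 a7 H1 H2.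
    lia.
  have n'z : n'%:Z != 0 by rewrite -lt0n; lia.
  pose r : XZm X n.+1 -> int := fun p => (G p %% n'%:Z)%Z.
  have lcr : lc r := lc_map (fun a => (a %% n'%:Z)%Z) lcG.
  have hinvr : forall p, r (gi p) = r p.
    move=> p; rewrite /r.
    have -> : G (gi p) = (- (g p - g (sg p))) * n'%:Z + G p.
      rewrite mulNr HG; move: (G p) (G (gi p)) => a1 a2; lia.
    exact: modzMDl.
  have hr := inv_const hskew lcr hinvr.
  pose c0 := r (x0, ord0).
  pose G' : XZm X n.+1 -> int := fun p => (G p %/ n'%:Z)%Z.
  have lcG' : lc G' := lc_map (fun a => (a %/ n'%:Z)%Z) lcG.
  have HGd : forall p, G p = G' p * n'%:Z + c0.
    move=> p; rewrite /c0 -(hr p) /r /G'; exact: divz_eq.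
  have Dg : forall p, g p - g (sg p) = G' p - G' (gi p).
    move=> p; apply: (mulIf n'z); rewrite HG (HGd p) (HGd (gi p)).
    rewrite mulrBl; move: (G' p * n'%:Z) (G' (gi p) * n'%:Z) => a1 a2; lia.
  have fs : forall x, (\sum_(j < n.+1) G' (x, j)) * n'%:Z = - (c0 * n.+1%:Z).
    move=> x; have := sumsg F x.
    rewrite (eq_bigr (fun j => G' (x, j) * n'%:Z + c0)); last by move=> j _; exact: HGd.
    rewrite big_split /= sumr_const card_ord -mulr_suml -mulr_natr natz.
    move: ((\sum_(j < n.+1) G' (x, j)) * n'%:Z) (c0 * n.+1%:Z) => a1 a2; lia.
  pose s := \sum_(j < n.+1) G' (x0, j).
  have hs : forall x, \sum_(j < n.+1) G' (x, j) = s.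
    by move=> x; apply: (mulIf n'z); rewrite fs fs.
  pose H2 : XZm X n.+1 -> int := fun p => G' p - E p * s.
  have lcH2 : lc H2.
    apply: (lc_map2 (fun a b => a - b) lcG'); exact: (lc_map (fun a => a * s) lcE).
  have sumH2 : forall x, \sum_(j < n.+1) H2 (x, j) = 0.
    move=> x; rewrite sumrB -mulr_suml hs.
    by rewrite (_ : \sum_(j < n.+1) E (x, j) = 1) ?mul1r ?subrr //; exact: sumE.
  pose W : XZm X n.+1 -> int := fun p => - \sum_(i : 'I_n.+1 | (i < p.2)%N) H2 (p.1, i).
  have DW : forall p, W p - W (sg p) = H2 p.
    by move=> [x j]; exact: (@K4 n (fun i => H2 (x, i)) j (sumH2 x)).
  have lcW : lc W.
    apply: lcXZ => j; apply: (lc_map (fun a => - a)).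
    by apply: lc_sum => i; exact: lc_slice.
  pose R : XZm X n.+1 -> int := fun p => g p - (W p - W (gi p)) + F0 p * s.
  have lcR : lc R.
    apply: (lc_map2 (fun a b => a + b)); last exact: (lc_map (fun a => a * s) lcF0).
    apply: (lc_map2 (fun a b => a - b) lcg).
    exact: (lc_map2 (fun a b => a - b) lcW (lcgi _ _ lcW)).
  have RS : forall p, R (sg p) = R p.
    move=> p; rewrite /R comm.
    have e1 := Dg p; have e2 := DW p; have e3 := DW (gi p).
    have e4 : F0 p * s - F0 (sg p) * s = E (gi p) * s - E p * s.
      by rewrite -!mulrBl Hf0.
    rewrite /H2 in e2 e3.
    move: e1 e2 e3 e4.
    move: (g p) (g (sg p)) (G' p) (G' (gi p)) (W p) (W (sg p)) (W (gi p)) (W (sg (gi p)))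
      (E p * s) (E (gi p) * s) (F0 p * s) (F0 (sg p) * s) => a1 a2 a3 a4 a5 a6 a7 a8 a9 a10 a11 a12.
    move=> e1 e2 e3 e4; lia.
  have Rc : forall x j, R (x, j) = R (x, ord0).
    move=> x; apply: ordS_ind => // j IH.
    by rewrite -IH -(RS (x, j)).
  pose q : X -> int := fun x => R (x, ord0).
  have lcq : lc q := lc_slice ord0 lcR.
  pose t := ((- s) %/ n.+1%:Z)%Z.
  exists `|((- s) %% n.+1%:Z)%Z|%N.
  have hsj : - s = t * n.+1%:Z + (`|((- s) %% n.+1%:Z)%Z|%N)%:Z.
    by rewrite gez0_abs ?modz_ge0 //; exact: divz_eq.
  exists (fun p => (W p + Fm p * t) - (W (gi p) + Fm (gi p) * t)),
         (fun x => q x + g0 x * t); split.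
  - exists (fun p => W p + Fm p * t); split => //; apply/cont_lc.
    exact: (lc_map2 (fun a b => a + b) lcW (lc_map (fun a => a * t) lcFm)).
  - apply/cont_lc; exact: (lc_map2 (fun a b => a + b) lcq (lc_map (fun a => a * t) lcg0)).
  - apply: funext => [[x j]].
    have e1 := Rc x j; have e2 := K2e (x, j).
    have e4 : R (x, j) = g (x, j) - (W (x, j) - W (gi (x, j))) + F0 (x, j) * s by [].
    rewrite /= in e2; rewrite /= /q.
    apply: (arith4 hsj e2); by rewrite -e1 e4.
Qed.
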